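(* Let $\Theta=S\cup E\cup X$ be an action theory whose big model $M_{big}=\langle W_{big},R_{big}\rangle$ is a model of $\Theta$. Then for every PDL-model $M=\langle W,R\rangle$ with $M\models\Theta$ there is a minimal (with respect to set inclusion) $R'\subseteq R_{big}\setminus R$ such that $\langle \mathrm{val}(S),R\cup R'\rangle$ is a model of $\Theta$.
   Context: Fix a set $\mathrm{Act}$ of atomic actions and a set $\mathrm{Prop}$ of atoms. Boolean formulas are classical propositional formulas over $\mathrm{Prop}$; a valuation is a maximal consistent set of literals; $\mathrm{val}(S)$ is the set of valuations satisfying every formula of $S$. Modal formulas are built from Boolean formulas with the Boolean connectives and $[a]$ for $a\in\mathrm{Act}$; $\langle a\rangle\Phi:=\neg[a]\neg\Phi$. A PDL-model is $M=\langle W,R\rangle$, $W$ a set of valuations, $R$ assigning to each $a$ a relation $R_a\subseteq W\times W$ (relations are compared as sets of labelled pairs); truth at worlds is standard ($w\models p$ iff $p\in w$; $w\models[a]\Phi$ iff all $R_a$-successors satisfy $\Phi$), and $M\models\Theta$ iff every formula of $\Theta$ holds at every world. A static law is a Boolean formula; an effect law for $a$ is $\varphi\to[a]\psi$; an executability law for $a$ is $\varphi\to\langle a\rangle\top$ ($\varphi,\psi$ Boolean). An action theory is $\Theta=S\cup E\cup X$ (static, effect, executability laws); $E_a$ is the set of effect laws for $a$. The big model of $\Theta$ is $M_{big}=\langle W_{big},R_{big}\rangle$ with $W_{big}=\mathrm{val}(S)$ and $(R_{big})_a=\{(w,w')\in W_{big}^2:$ for all $\varphi\to[a]\psi\in E_a$,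 if $w\models\varphi$ then $w'\models\psi\}$. *)

(* Defs.v *)
Set Implicit Arguments.

Section Syntax.
Variables (Act Atom : Type).

Inductive bform : Type :=
| BAtom : Atom -> bform
| BTop : bform
| BBot : bform
| BNeg : bform -> bform
| BAnd : bform -> bform -> bform
| BOr : bform -> bform -> bform
| BImp : bform -> bform -> bform.

Inductive mform : Type :=
| MBool : bform -> mform
| MNeg : mform -> mform
| MAnd : mform -> mform -> mform
| MOr : mform -> mform -> mform
| MImp : mform -> mform -> mform
| MBox : Act -> mform -> mform.

Definition MDia (a : Act) (f : mform) : mform := MNeg (MBox a (MNeg f)).

(* A valuation (maximal consistent set of literals) is represented by
   the truth value it assigns to each atom. *)
Definition valuation := Atom -> bool.

Fixpoint beval (w : valuation) (f : bform) : bool :=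
  match f with
  | BAtom p => w p
  | BTop => true
  | BBot => false
  | BNeg g => negb (beval w g)
  | BAnd g h => andb (beval w g) (beval w h)
  | BOr g h => orb (beval w g) (beval w h)
  | BImp g h => orb (negb (beval w g)) (beval w h)
  end.

Definition worlds := valuation -> Prop.
Definition arel := Act -> valuation -> valuation -> Prop.

Fixpoint sat (R : arel) (w : valuation) (f : mform) : Prop :=
  match f with
  | MBool b => beval w b = true
  | MNeg g => ~ sat R w g
  | MAnd g h => sat R w g /\ sat R w h
  | MOr g h => sat R w g \/ sat R w h
  | MImp g h => sat R w g -> sat R w h
  | MBox a g => forall w', R a w w' -> sat R w' g
  end.

Definition is_frame (W : worlds) (R : arel) : Prop :=
  forall a w w', R a w w' -> W w /\ W w'.

Definition models (W : worlds) (R : arel) (T : mform -> Prop) : Prop :=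
  is_frame W R /\ (forall f, T f -> forall w, W w -> sat R w f).

(* Action theory Θ = S ∪ E ∪ X given by:
   S : set of static laws (Boolean formulas),
   E a φ ψ : "φ → [a]ψ" is an effect law of Θ,
   X a φ : "φ → <a>⊤" is an executability law of Θ. *)
Definition static_laws := bform -> Prop.
Definition effect_laws := Act -> bform -> bform -> Prop.
Definition exec_laws := Act -> bform -> Prop.

Definition theory (S : static_laws) (E : effect_laws) (X : exec_laws)
  : mform -> Prop :=
  fun f =>
    (exists phi, S phi /\ f = MBool phi)
    \/ (exists a phi psi, E a phi psi /\ f = MImp (MBool phi) (MBox a (MBool psi)))
    \/ (exists a phi, X a phi /\ f = MImp (MBool phi) (MDia a (MBool BTop))).

Definition valS (S : static_laws) : worlds :=
  fun w => forall phi, S phi -> beval w phi = true.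

Definition W_big (S : static_laws) : worlds := valS S.

Definition R_big (S : static_laws) (E : effect_laws) : arel :=
  fun a w w' => valS S w /\ valS S w' /\
    (forall phi psi, E a phi psi -> beval w phi = true -> beval w' psi = true).

Definition rel_sub (R1 R2 : arel) : Prop := forall a w w', R1 a w w' -> R2 a w w'.
Definition rel_union (R1 R2 : arel) : arel := fun a w w' => R1 a w w' \/ R2 a w w'.
Definition rel_diff (R1 R2 : arel) : arel := fun a w w' => R1 a w w' /\ ~ R2 a w w'.

End Syntax.

(* Main.v *)
Require Import Defs.
From Stdlib Require Import Classical ClassicalEpsilon.

Theorem lemma3 (Act Atom : Type)
  (S : static_laws Atom) (E : effect_laws Act Atom) (X : exec_laws Act Atom) :
  models (W_big S) (R_big S E) (theory S E X) ->
  forall (W : worlds Atom) (R : arel Act Atom),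
    models W R (theory S E X) ->
    exists R' : arel Act Atom,
      rel_sub R' (rel_diff (R_big S E) R) /\
      models (valS S) (rel_union R R') (theory S E X) /\
      (forall R'' : arel Act Atom,
          rel_sub R'' (rel_diff (R_big S E) R) ->
          models (valS S) (rel_union R R'') (theory S E X) ->
          rel_sub R'' R' -> rel_sub R' R'').
Proof.
  intros [_ HB] W R [HF HM].
  set (need := fun a w => valS S w /\ (~ exists v, R a w v) /\
                 (exists phi, X a phi /\ beval w phi = true)).
  assert (Hex : forall a w, exists w', need a w -> R_big S E a w w').
  { intros a w. destruct (classic (need a w)) as [Hn|Hn].
    - destruct Hn as [Hv [_ [phi [Hx Hp]]]].
      assert (Hs := HB (MImp (MBool Act phi) (MDia a (MBool Act (BTop Atom))))).
      simpl in Hs.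
      assert (Hs' : ~ (forall w', R_big S E a w w' -> true <> true)).
      { apply Hs; [right; right; exists a, phi; auto | exact Hv | exact Hp]. }
      apply not_all_ex_not in Hs'. destruct Hs' as [w' Hw'].
      exists w'. intros _. apply NNPP. intro C. apply Hw'. intro. contradiction.
    - exists w. intro; contradiction. }
  set (f := fun a w => proj1_sig (constructive_indefinite_description _ (Hex a w))).
  assert (Hf : forall a w, need a w -> R_big S E a w (f a w)).
  { intros a w. unfold f. destruct (constructive_indefinite_description _ (Hex a w)); simpl; auto. }
  assert (HWS : forall w, W w -> valS S w).
  { intros w Hw phi Hphi. apply (HM (MBool Act phi)); [left; exists phi; auto | exact Hw]. }
  exists (fun a w w' => need a w /\ w' = f a w).
  split; [|split].
  - intros a w w' [Hn ->]. split; [apply Hf; auto|].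
    intro C. destruct Hn as [_ [Hn _]]. apply Hn; eauto.
  - split.
    + intros a w w' [H|[Hn ->]].
      * destruct (HF _ _ _ H). auto.
      * pose proof (Hf _ _ Hn) as [? [? _]]. auto.
    + intros g Hg w Hw.
      destruct Hg as [[phi [Hphi ->]]|[[a [phi [psi [He ->]]]]|[a [phi [Hx ->]]]]]; simpl.
      * apply Hw; auto.
      * intros Hp w' [H|[Hn ->]].
        -- destruct (HF _ _ _ H) as [HW _].
           exact (HM (MImp (MBool Act phi) (MBox a (MBool Act psi)))
                   (or_intror (or_introl (ex_intro _ a (ex_intro _ phi (ex_intro _ psi (conj He eq_refl))))))
                   w HW Hp w' H).
        -- pose proof (Hf _ _ Hn) as [_ [_ Hh]]. eauto.
      * intros Hp C. destruct (classic (exists v, R a w v)) as [[v Hv]|Hnv].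
        -- apply (C v); auto. left; auto.
        -- apply (C (f a w)); auto. right. split; auto. split; auto. split; eauto.
  - intros R'' _ [_ HM''] Hsub a w w' [Hn ->].
    destruct Hn as [Hv [Hnv [phi [Hx Hp]]]].
    assert (Hs := HM'' (MImp (MBool Act phi) (MDia a (MBool Act (BTop Atom))))
                  (or_intror (or_intror (ex_intro _ a (ex_intro _ phi (conj Hx eq_refl))))) w Hv).
    simpl in Hs. specialize (Hs Hp).
    apply NNPP. intro C. apply Hs. intros w'' [H|H] _.
    + apply Hnv; eauto.
    + destruct (Hsub _ _ _ H) as [_ ->]. contradiction.
Qed.
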